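(* Let $n>1$, $I$ an index set, $S,T\in GL(n+1,\mathbb C)$, and for $r\in I$ let $P_r=S\,\mathrm{diag}\{p_{1r},\dots,p_{n+1,r}\}S^{-1}$, $Q_r=T\,\mathrm{diag}\{q_{1r},\dots,q_{n+1,r}\}T^{-1}$ (all entries nonzero), and assume that for every $r\in I$ the sets $\{\ln\frac{p_{kr}}{p_{n+1,r}}\}_{k=1}^n$ and $\{\ln\frac{q_{kr}}{q_{n+1,r}}\}_{k=1}^n$ are simple. There exists a biholomorphic map $f\colon\mathbb CP^n\to\mathbb CP^n$ with $f(P_rv)=Q_rf(v)$ for all $v\in\mathbb CP^n$, $r\in I$, if and only if there exists a permutation $\varrho$ of $\{1,\dots,n+1\}$ such that $\dfrac{q_{\varrho(k)r}}{q_{\varrho(n+1)r}}=\dfrac{p_{kr}}{p_{n+1,r}}$ for all $r\in I$, $k=1,\dots,n$.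
   Context: A matrix $P\in GL(n+1,\mathbb C)$ acts on $\mathbb CP^n$ by the induced projective transformation. $\ln$ is the principal branch. A set $\{\lambda_1,\dots,\lambda_n\}$ of nonzero complex numbers is simple if for all $k\neq l$, $\lambda_k/\lambda_l\notin\{s,1/s:s\in\mathbb N\}$. *)

(* Defs.v *)
From Stdlib Require Import Reals.
Open Scope R_scope.

Definition Cplx : Type := (R * R)%type.
Definition C0 : Cplx := (0, 0).
Definition C1 : Cplx := (1, 0).
Definition RtoC (x : R) : Cplx := (x, 0).
Definition Cadd (z w : Cplx) : Cplx := (fst z + fst w, snd z + snd w).
Definition Copp (z : Cplx) : Cplx := (- fst z, - snd z).
Definition Csub (z w : Cplx) : Cplx := Cadd z (Copp w).
Definition Cmul (z w : Cplx) : Cplx :=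
  (fst z * fst w - snd z * snd w, fst z * snd w + snd z * fst w).
Definition Cnorm2 (z : Cplx) : R := fst z * fst z + snd z * snd z.
Definition Cinv (z : Cplx) : Cplx := (fst z / Cnorm2 z, - snd z / Cnorm2 z).
Definition Cdiv (z w : Cplx) : Cplx := Cmul z (Cinv w).
Definition Cabs (z : Cplx) : R := sqrt (Cnorm2 z).

(** principal argument, with values in (-PI, PI] (the usual atan2) *)
Definition Arg (z : Cplx) : R :=
  let x := fst z in let y := snd z in
  if Rlt_dec 0 x then atan (y / x)
  else if Rlt_dec x 0 then
    (if Rle_dec 0 y then atan (y / x) + PI else atan (y / x) - PI)
  else if Rlt_dec 0 y then PI / 2
  else if Rlt_dec y 0 then - (PI / 2)
  else 0.

Definition Cln (z : Cplx) : Cplx := (ln (Cabs z), Arg z).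

(** * Vectors and matrices of size N (indices 0 .. N-1) *)
Definition vec : Type := nat -> Cplx.
Definition mat : Type := nat -> nat -> Cplx.

Fixpoint Csum (m : nat) (f : nat -> Cplx) : Cplx :=
  match m with O => C0 | S m' => Cadd (Csum m' f) (f m') end.
Fixpoint Rsumn (m : nat) (f : nat -> R) : R :=
  match m with O => 0 | S m' => Rsumn m' f + f m' end.

Definition mulmv (N : nat) (A : mat) (v : vec) : vec :=
  fun i => Csum N (fun k => Cmul (A i k) (v k)).
Definition mulmm (N : nat) (A B : mat) : mat :=
  fun i j => Csum N (fun k => Cmul (A i k) (B k j)).
Definition idm : mat := fun i j => if Nat.eqb i j then C1 else C0.
Definition diagm (d : vec) : mat := fun i j => if Nat.eqb i j then d i else C0.

Definition mat_inverse (N : nat) (A B : mat) : Prop :=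
  forall i j, (i < N)%nat -> (j < N)%nat ->
    mulmm N A B i j = idm i j /\ mulmm N B A i j = idm i j.

Definition conj_diag (N : nat) (S Sinv : mat) (d : vec) : mat :=
  mulmm N (mulmm N S (diagm d)) Sinv.

Definition vadd (v w : vec) : vec := fun k => Cadd (v k) (w k).
Definition vsub (v w : vec) : vec := fun k => Csub (v k) (w k).
Definition vnorm (N : nat) (v : vec) : R := Rsumn N (fun k => Cabs (v k)).

(** * Complex projective space CP^{N-1}: nonzero vectors up to scaling *)
Definition nonzero_vec (N : nat) (v : vec) : Prop :=
  exists k, (k < N)%nat /\ v k <> C0.
Definition proj_eq (N : nat) (v w : vec) : Prop :=
  exists l, l <> C0 /\ forall k, (k < N)%nat -> w k = Cmul l (v k).

(** F : vec -> vec is a lift of a well-defined self-map of CP^{N-1} *)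
Definition proj_map (N : nat) (F : vec -> vec) : Prop :=
  (forall v, nonzero_vec N v -> nonzero_vec N (F v)) /\
  (forall v w, nonzero_vec N v -> proj_eq N v w -> proj_eq N (F v) (F w)).

Definition C_differentiable_at (N : nat) (g : vec -> Cplx) (w : vec) : Prop :=
  exists a : vec, forall eps, eps > 0 -> exists delta, delta > 0 /\
    forall h, vnorm N h < delta ->
      Cabs (Csub (Csub (g (vadd w h)) (g w)) (Csum N (fun k => Cmul (a k) (h k))))
        <= eps * vnorm N h.

(** affine chart U_i = {v_i <> 0}: w |-> (w_0, .., 1 (at i), .., w_{N-1}) ;
    the i-th coordinate of w is a dummy variable *)
Definition chart_emb (i : nat) (w : vec) : vec :=
  fun k => if Nat.eqb k i then C1 else w k.

(** holomorphy of the induced map of CP^{N-1}: around every point, for every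
    chart U_i at the point and chart U_j at its image, the map sends a
    neighbourhood into U_j and its chart expression is holomorphic there *)
Definition holo_proj (N : nat) (F : vec -> vec) : Prop :=
  forall (v0 : vec) (i j : nat), (i < N)%nat -> (j < N)%nat ->
    v0 i <> C0 -> F v0 j <> C0 ->
    let w0 := fun k => Cdiv (v0 k) (v0 i) in
    exists delta, delta > 0 /\
      forall w, vnorm N (vsub w w0) < delta ->
        F (chart_emb i w) j <> C0 /\
        forall k, (k < N)%nat ->
          C_differentiable_at N
            (fun u => Cdiv (F (chart_emb i u) k) (F (chart_emb i u) j)) w.

(** F (and G) lift mutually inverse holomorphic self-maps of CP^{N-1} *)
Definition biholo_proj (N : nat) (F G : vec -> vec) : Prop :=
  proj_map N F /\ proj_map N G /\
  (forall v, nonzero_vec N v -> proj_eq N v (G (F v))) /\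
  (forall v, nonzero_vec N v -> proj_eq N v (F (G v))) /\
  holo_proj N F /\ holo_proj N G.

Definition simple_set (n : nat) (lam : nat -> Cplx) : Prop :=
  (forall k, (k < n)%nat -> lam k <> C0) /\
  forall k l, (k < n)%nat -> (l < n)%nat -> k <> l ->
    forall s : nat, (1 <= s)%nat ->
      Cdiv (lam k) (lam l) <> RtoC (INR s) /\
      Cdiv (lam k) (lam l) <> RtoC (/ INR s).

Definition is_perm (N : nat) (rho : nat -> nat) : Prop :=
  (forall k, (k < N)%nat -> (rho k < N)%nat) /\
  (forall k l, (k < N)%nat -> (l < N)%nat -> rho k = rho l -> k = l).

(* Main.v *)
Require Import Defs.
From Stdlib Require Import Reals Lra Lia Psatz Field Ring.
From Stdlib Require Import Classical FunctionalExtensionality ClassicalEpsilon.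
Open Scope R_scope.
Notation C0 := Defs.C0.
Notation C1 := Defs.C1.

Lemma Cext (z w : Cplx) : fst z = fst w -> snd z = snd w -> z = w.
Proof. destruct z, w; simpl; intros; subst; reflexivity. Qed.

Ltac cunf := unfold Cadd, Copp, Csub, Cmul, Cinv, Cdiv, C0, C1, Cnorm2 in *; simpl in *.

Lemma Cnorm2_pos (z : Cplx) : z <> C0 -> 0 < Cnorm2 z.
Proof.
  destruct z as [x y]; intro H; unfold Cnorm2; simpl.
  destruct (Req_dec x 0); destruct (Req_dec y 0); subst.
  - exfalso; apply H; reflexivity.
  - assert (0 < y*y) by (apply Rsqr_pos_lt; auto). nra.
  - assert (0 < x*x) by (apply Rsqr_pos_lt; auto). nra.
  - assert (0 < y*y) by (apply Rsqr_pos_lt; auto). nra.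
Qed.

Lemma Cfield_th : field_theory C0 C1 Cadd Cmul Csub Copp Cdiv Cinv (@eq Cplx).
Proof.
  constructor.
  - constructor; intros; apply Cext; cunf; ring.
  - intro H. injection H. lra.
  - reflexivity.
  - intros p Hp. apply Cext; cunf.
    + pose proof (Cnorm2_pos p Hp) as Hn. unfold Cnorm2 in Hn. destruct p as [x y]; simpl in *. field. lra.
    + pose proof (Cnorm2_pos p Hp) as Hn. unfold Cnorm2 in Hn. destruct p as [x y]; simpl in *. field. lra.
Qed.

Add Field Cfield : Cfield_th.

Declare Scope C_scope.
Delimit Scope C_scope with C.
Infix "+" := Cadd : C_scope.
Infix "*" := Cmul : C_scope.
Infix "-" := Csub : C_scope.
Infix "/" := Cdiv : C_scope.
Notation "- x" := (Copp x) : C_scope.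

Lemma test (a b : Cplx) : b <> C0 -> Cmul (Cdiv a b) b = a.
Proof. intros. field. auto. Qed.
Lemma Cnorm2_nonneg z : 0 <= Cnorm2 z.
Proof. unfold Cnorm2; nra. Qed.

Lemma Cabs_nonneg z : 0 <= Cabs z.
Proof. unfold Cabs; apply sqrt_pos. Qed.

Lemma Cabs_C0 : Cabs C0 = 0.
Proof. unfold Cabs, Cnorm2, C0; simpl. replace (0*0+0*0) with 0 by ring. apply sqrt_0. Qed.

Lemma Cabs_eq0 z : Cabs z = 0 -> z = C0.
Proof.
  intro H. destruct (classic (z = C0)) as [|Hz]; auto.
  pose proof (Cnorm2_pos z Hz). unfold Cabs in H.
  apply sqrt_eq_0 in H; [lra| apply Cnorm2_nonneg].
Qed.

Lemma Cabs_pos z : z <> C0 -> 0 < Cabs z.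
Proof.
  intro Hz. pose proof (Cabs_nonneg z). destruct (Req_dec (Cabs z) 0).
  - apply Cabs_eq0 in H0; contradiction.
  - lra.
Qed.

Lemma Cabs_mul z w : Cabs (Cmul z w) = Cabs z * Cabs w.
Proof.
  unfold Cabs. rewrite <- sqrt_mult by apply Cnorm2_nonneg. f_equal.
  unfold Cnorm2, Cmul; simpl. ring.
Qed.

Lemma Cabs_opp z : Cabs (Copp z) = Cabs z.
Proof. unfold Cabs; f_equal; unfold Cnorm2, Copp; simpl; ring. Qed.

Lemma Cabs_triangle z w : Cabs (Cadd z w) <= Cabs z + Cabs w.
Proof.
  unfold Cabs.
  pose proof (Cnorm2_nonneg z); pose proof (Cnorm2_nonneg w).
  pose proof (sqrt_pos (Cnorm2 z)); pose proof (sqrt_pos (Cnorm2 w)).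
  apply Rsqr_incr_0_var; [| lra].
  rewrite Rsqr_sqrt by apply Cnorm2_nonneg.
  unfold Rsqr. 
  replace ((sqrt (Cnorm2 z) + sqrt (Cnorm2 w)) * (sqrt (Cnorm2 z) + sqrt (Cnorm2 w)))
    with (sqrt (Cnorm2 z) * sqrt (Cnorm2 z) + sqrt (Cnorm2 w) * sqrt (Cnorm2 w) + 2 * (sqrt (Cnorm2 z * Cnorm2 w))) by (rewrite sqrt_mult by auto; ring).
  rewrite !sqrt_sqrt by auto.
  destruct z as [x y]; destruct w as [u v]; unfold Cnorm2, Cadd in *; simpl in *.
  assert (x*u+y*v <= sqrt ((x * x + y * y) * (u * u + v * v))).
  { destruct (Rle_dec (x*u+y*v) 0). { pose proof (sqrt_pos ((x * x + y * y) * (u * u + v * v))). lra. }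
    rewrite <- (sqrt_Rsqr (x*u+y*v)) by lra. apply sqrt_le_1_alt. pose proof (Rle_0_sqr (x*v-y*u)). unfold Rsqr in *. nra. }
  nra.
Qed.

Lemma Cabs_sub_triangle z w : Cabs (Csub z w) <= Cabs z + Cabs w.
Proof. unfold Csub. rewrite <- (Cabs_opp w). apply Cabs_triangle. Qed.

Lemma Cabs_sub_sym z w : Cabs (Csub z w) = Cabs (Csub w z).
Proof. replace (Csub z w) with (Copp (Csub w z)) by ring. apply Cabs_opp. Qed.

Lemma Cabs_rev_triangle z w : Cabs z - Cabs w <= Cabs (Csub z w).
Proof.
  pose proof (Cabs_triangle (Csub z w) w).
  replace (Cadd (Csub z w) w) with z in H by ring. lra.
Qed.

Lemma Cabs_inv z : z <> C0 -> Cabs (Cinv z) = / Cabs z.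
Proof.
  intro Hz. pose proof (Cabs_pos z Hz).
  assert (Cabs (Cinv z) * Cabs z = 1).
  { rewrite <- Cabs_mul. replace (Cmul (Cinv z) z) with C1 by (field; auto).
    unfold Cabs, Cnorm2, C1; simpl. replace (1*1+0*0) with 1 by ring. apply sqrt_1. }
  apply (Rmult_eq_reg_r (Cabs z)); [| lra]. rewrite H0. field. lra.
Qed.

Lemma Cabs_RtoC x : Cabs (RtoC x) = Rabs x.
Proof.
  unfold Cabs, Cnorm2, RtoC; simpl. replace (x*x+0*0) with (Rsqr x) by (unfold Rsqr; ring).
  apply sqrt_Rsqr_abs.
Qed.

Lemma C1_neq_C0 : C1 <> C0.
Proof. intro H; injection H; lra. Qed.

Lemma Cmul_neq0 z w : z <> C0 -> w <> C0 -> Cmul z w <> C0.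
Proof.
  intros Hz Hw H. apply Hz. replace z with (Cmul (Cmul z w) (Cinv w)) by (field; auto).
  rewrite H. ring.
Qed.

Lemma Cinv_neq0 z : z <> C0 -> Cinv z <> C0.
Proof.
  intros Hz H. apply C1_neq_C0. replace C1 with (Cmul (Cinv z) z) by (field; auto). rewrite H; ring.
Qed.

Lemma Cdiv_neq0 z w : z <> C0 -> w <> C0 -> Cdiv z w <> C0.
Proof. intros; unfold Cdiv; apply Cmul_neq0; auto; apply Cinv_neq0; auto. Qed.

Lemma Cmul_eq0 z w : Cmul z w = C0 -> z = C0 \/ w = C0.
Proof.
  intro H. destruct (classic (z = C0)); auto. destruct (classic (w = C0)); auto.
  exfalso; apply (Cmul_neq0 z w); auto.
Qed.
Lemma Csum_ext m f g : (forall k, (k < m)%nat -> f k = g k) -> Csum m f = Csum m g.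
Proof.
  induction m; intros H; simpl; auto.
  rewrite IHm by (intros; apply H; lia). rewrite H by lia. reflexivity.
Qed.

Lemma Csum_add m f g : Csum m (fun k => Cadd (f k) (g k)) = Cadd (Csum m f) (Csum m g).
Proof. induction m; simpl. - unfold C0, Cadd; simpl; apply Cext; simpl; ring. - rewrite IHm. ring. Qed.

Lemma Csum_sub m f g : Csum m (fun k => Csub (f k) (g k)) = Csub (Csum m f) (Csum m g).
Proof. induction m; simpl. - apply Cext; cunf; ring. - rewrite IHm. ring. Qed.

Lemma Csum_scal m c f : Csum m (fun k => Cmul c (f k)) = Cmul c (Csum m f).
Proof. induction m; simpl. - apply Cext; cunf; ring. - rewrite IHm. ring. Qed.

Lemma Csum_scal_r m c f : Csum m (fun k => Cmul (f k) c) = Cmul (Csum m f) c.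
Proof. induction m; simpl. - apply Cext; cunf; ring. - rewrite IHm. ring. Qed.

Lemma Csum_zero m f : (forall k, (k < m)%nat -> f k = C0) -> Csum m f = C0.
Proof.
  induction m; intros H; simpl; auto.
  rewrite IHm by (intros; apply H; lia). rewrite H by lia. ring.
Qed.

Lemma Csum_single m f k0 : (k0 < m)%nat -> (forall k, (k < m)%nat -> k <> k0 -> f k = C0) ->
  Csum m f = f k0.
Proof.
  induction m; intros Hk H; [lia|]. simpl.
  destruct (Nat.eq_dec k0 m).
  - subst. rewrite Csum_zero by (intros; apply H; lia). ring.
  - rewrite IHm by (try lia; intros; apply H; lia). rewrite (H m) by lia. ring.
Qed.

Lemma Csum_exchange m n f :
  Csum m (fun i => Csum n (fun j => f i j)) = Csum n (fun j => Csum m (fun i => f i j)).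
Proof.
  induction m; simpl.
  - rewrite Csum_zero; auto.
  - rewrite IHm. rewrite <- Csum_add. reflexivity.
Qed.

Lemma Rsumn_ext m f g : (forall k, (k < m)%nat -> f k = g k) -> Rsumn m f = Rsumn m g.
Proof.
  induction m; intros H; simpl; auto.
  rewrite IHm by (intros; apply H; lia). rewrite H by lia. reflexivity.
Qed.

Lemma Rsumn_le m f g : (forall k, (k < m)%nat -> f k <= g k) -> Rsumn m f <= Rsumn m g.
Proof.
  induction m; intros H; simpl; [lra|].
  pose proof (IHm ltac:(intros; apply H; lia)). pose proof (H m ltac:(lia)). lra.
Qed.

Lemma Rsumn_nonneg m f : (forall k, (k < m)%nat -> 0 <= f k) -> 0 <= Rsumn m f.
Proof.
  induction m; intros H; simpl; [lra|].
  pose proof (IHm ltac:(intros; apply H; lia)). pose proof (H m ltac:(lia)). lra.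
Qed.

Lemma Rsumn_scal m c f : Rsumn m (fun k => c * f k) = c * Rsumn m f.
Proof. induction m; simpl; [ring|]. rewrite IHm. ring. Qed.

Lemma Rsumn_add m f g : Rsumn m (fun k => f k + g k) = Rsumn m f + Rsumn m g.
Proof. induction m; simpl; [ring|]. rewrite IHm. ring. Qed.

Lemma Rsumn_term m f k : (k < m)%nat -> (forall j, (j < m)%nat -> 0 <= f j) -> f k <= Rsumn m f.
Proof.
  induction m; intros Hk H; [lia|]. simpl.
  destruct (Nat.eq_dec k m).
  - subst. pose proof (Rsumn_nonneg m f ltac:(intros; apply H; lia)). lra.
  - pose proof (IHm ltac:(lia) ltac:(intros; apply H; lia)). pose proof (H m ltac:(lia)). lra.
Qed.

Lemma Cabs_Csum m f : Cabs (Csum m f) <= Rsumn m (fun k => Cabs (f k)).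
Proof.
  induction m; simpl. - rewrite Cabs_C0; lra.
  - pose proof (Cabs_triangle (Csum m f) (f m)). lra.
Qed.

Lemma vnorm_nonneg N h : 0 <= vnorm N h.
Proof. unfold vnorm; apply Rsumn_nonneg; intros; apply Cabs_nonneg. Qed.

Lemma vnorm_term N h k : (k < N)%nat -> Cabs (h k) <= vnorm N h.
Proof. intros; unfold vnorm; apply (Rsumn_term N (fun k => Cabs (h k))); auto; intros; apply Cabs_nonneg. Qed.

Lemma Csum_lin_bound N (a h : vec) :
  Cabs (Csum N (fun k => Cmul (a k) (h k))) <= Rsumn N (fun k => Cabs (a k)) * vnorm N h.
Proof.
  eapply Rle_trans; [apply Cabs_Csum|].
  unfold vnorm. rewrite <- Rsumn_scal. apply Rsumn_le. intros k Hk.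
  rewrite Cabs_mul. apply Rmult_le_compat_r; [apply Cabs_nonneg|].
  apply (Rsumn_term N (fun k => Cabs (a k))); auto; intros; apply Cabs_nonneg.
Qed.

Lemma mulmv_mulmm N A B v : mulmv N (mulmm N A B) v = mulmv N A (mulmv N B v).
Proof.
  extensionality i. unfold mulmv, mulmm.
  transitivity (Csum N (fun k => Csum N (fun l => Cmul (A i l) (Cmul (B l k) (v k))))).
  - apply Csum_ext; intros. rewrite <- Csum_scal_r. apply Csum_ext; intros; ring.
  - rewrite Csum_exchange. apply Csum_ext; intros. rewrite <- Csum_scal. reflexivity.
Qed.

Lemma mulmv_ext N A v w : (forall k, (k < N)%nat -> v k = w k) -> mulmv N A v = mulmv N A w.
Proof. intros H; extensionality i; unfold mulmv; apply Csum_ext; intros; rewrite H; auto. Qed.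

Lemma mulmv_diag N d v i : (i < N)%nat -> mulmv N (diagm d) v i = Cmul (d i) (v i).
Proof.
  intros Hi. unfold mulmv, diagm. rewrite (Csum_single N _ i Hi).
  - rewrite Nat.eqb_refl. reflexivity.
  - intros k Hk Hne. destruct (Nat.eqb_spec i k); [lia|]. ring.
Qed.

Lemma mulmv_id N v i : (i < N)%nat -> mulmv N idm v i = v i.
Proof.
  intros Hi. unfold mulmv, idm. rewrite (Csum_single N _ i Hi).
  - rewrite Nat.eqb_refl. ring.
  - intros k Hk Hne. destruct (Nat.eqb_spec i k); [lia|]. ring.
Qed.

Lemma mulmv_inv_l N A B v i : mat_inverse N A B -> (i < N)%nat -> mulmv N B (mulmv N A v) i = v i.
Proof.
  intros H Hi. rewrite <- mulmv_mulmm. rewrite <- (mulmv_id N v i Hi).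
  unfold mulmv. apply Csum_ext; intros. rewrite (proj2 (H i k Hi H0)). reflexivity.
Qed.

Lemma mulmv_inv_r N A B v i : mat_inverse N A B -> (i < N)%nat -> mulmv N A (mulmv N B v) i = v i.
Proof.
  intros H Hi. rewrite <- mulmv_mulmm. rewrite <- (mulmv_id N v i Hi).
  unfold mulmv. apply Csum_ext; intros. rewrite (proj1 (H i k Hi H0)). reflexivity.
Qed.

Lemma mulmv_scal N A c v : mulmv N A (fun k => Cmul c (v k)) = fun i => Cmul c (mulmv N A v i).
Proof. extensionality i; unfold mulmv. rewrite <- Csum_scal. apply Csum_ext; intros; ring. Qed.

Lemma mulmv_add N A v w : mulmv N A (fun k => Cadd (v k) (w k)) = fun i => Cadd (mulmv N A v i) (mulmv N A w i).
Proof. extensionality i; unfold mulmv. rewrite <- Csum_add. apply Csum_ext; intros; ring. Qed.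

Lemma conj_diag_apply N S Sinv d v i : (i < N)%nat ->
  mulmv N (conj_diag N S Sinv d) v i = mulmv N S (fun k => Cmul (d k) (mulmv N Sinv v k)) i.
Proof.
  intros Hi. unfold conj_diag. rewrite !mulmv_mulmm.
  rewrite (mulmv_ext N S _ (fun k => Cmul (d k) (mulmv N Sinv v k))); auto.
  intros; apply mulmv_diag; auto.
Qed.
Definition ev (P : Cplx -> Prop) : Prop := exists d, d > 0 /\ forall t, Cabs t < d -> P t.

Lemma ev_and P Q : ev P -> ev Q -> ev (fun t => P t /\ Q t).
Proof.
  intros [d1 [H1 P1]] [d2 [H2 P2]]. exists (Rmin d1 d2). split; [apply Rmin_Rgt_r; auto|].
  intros t Ht. pose proof (Rmin_l d1 d2); pose proof (Rmin_r d1 d2). split; [apply P1|apply P2]; lra.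
Qed.

Lemma ev_mono (P Q : Cplx -> Prop) : (forall t, P t -> Q t) -> ev P -> ev Q.
Proof. intros H [d [Hd HP]]; exists d; split; auto. Qed.

Lemma ev_fin m (P : nat -> Cplx -> Prop) : (forall k, (k < m)%nat -> ev (P k)) ->
  ev (fun t => forall k, (k < m)%nat -> P k t).
Proof.
  induction m; intros H.
  - exists 1; split; [lra|]. intros; lia.
  - destruct (IHm ltac:(intros; apply H; lia)) as [d1 [H1 P1]].
    destruct (H m ltac:(lia)) as [d2 [H2 P2]].
    exists (Rmin d1 d2). split; [apply Rmin_Rgt_r; auto|].
    intros t Ht k Hk. pose proof (Rmin_l d1 d2); pose proof (Rmin_r d1 d2).
    destruct (Nat.eq_dec k m). + subst; apply P2; lra. + apply P1; [lra| lia].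
Qed.

Lemma ev_small e : e > 0 -> ev (fun t => Cabs t < e).
Proof. intros; exists e; split; auto. Qed.

Definition o1 (r : Cplx -> Cplx) : Prop :=
  forall eps, eps > 0 -> ev (fun t => Cabs (r t) <= eps * Cabs t).
Definition van (r : Cplx -> Cplx) : Prop :=
  forall eps, eps > 0 -> ev (fun t => Cabs (r t) <= eps).
Definition bnd (r : Cplx -> Cplx) : Prop :=
  exists K, ev (fun t => Cabs (r t) <= K).

Lemma o1_ev r s : ev (fun t => r t = s t) -> o1 r -> o1 s.
Proof.
  intros He Hr eps Heps. eapply ev_mono; [|apply (ev_and _ _ He (Hr eps Heps))].
  intros t [E H]; rewrite <- E; auto.
Qed.

Lemma o1_ext r s : (forall t, r t = s t) -> o1 r -> o1 s.
Proof. intros H; apply o1_ev. exists 1; split; [lra|]; auto. Qed.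

Lemma o1_add r s : o1 r -> o1 s -> o1 (fun t => Cadd (r t) (s t)).
Proof.
  intros Hr Hs eps Heps.
  eapply ev_mono; [|apply (ev_and _ _ (Hr (eps/2) ltac:(lra)) (Hs (eps/2) ltac:(lra)))].
  intros t [A B]. eapply Rle_trans; [apply Cabs_triangle|]. lra.
Qed.

Lemma o1_opp r : o1 r -> o1 (fun t => Copp (r t)).
Proof. intros Hr eps He. eapply ev_mono; [|apply (Hr eps He)]. intros t H; rewrite Cabs_opp; auto. Qed.

Lemma o1_sub r s : o1 r -> o1 s -> o1 (fun t => Csub (r t) (s t)).
Proof. intros; apply o1_add; auto; apply o1_opp; auto. Qed.

Lemma o1_mul_bnd r s : o1 r -> bnd s -> o1 (fun t => Cmul (r t) (s t)).
Proof.
  intros Hr [K HK] eps Heps.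
  set (K' := Rabs K + 1).
  assert (K' > 0) by (unfold K'; pose proof (Rabs_pos K); lra).
  eapply ev_mono; [|apply (ev_and _ _ (Hr (eps / K') ltac:(apply Rdiv_lt_0_compat; lra)) HK)].
  intros t [A B]. rewrite Cabs_mul.
  assert (Cabs (s t) <= K') by (unfold K'; pose proof (Rle_abs K); lra).
  pose proof (Cabs_nonneg (r t)); pose proof (Cabs_nonneg (s t)); pose proof (Cabs_nonneg t).
  apply Rle_trans with (eps / K' * Cabs t * K').
  - apply Rmult_le_compat; auto.
  - right. field. lra.
Qed.

Lemma o1_scal k r : o1 r -> o1 (fun t => Cmul k (r t)).
Proof.
  intros Hr. apply (o1_ext (fun t => Cmul (r t) k)); [intros; ring|].
  apply o1_mul_bnd; auto. exists (Cabs k). exists 1; split; [lra|]; intros; lra.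
Qed.

Lemma o1_van_t s : van s -> o1 (fun t => Cmul (s t) t).
Proof.
  intros Hs eps He. eapply ev_mono; [|apply (Hs eps He)].
  intros t H. rewrite Cabs_mul. apply Rmult_le_compat_r; auto. apply Cabs_nonneg.
Qed.

Lemma o1_zero : o1 (fun _ => C0).
Proof. intros eps He. exists 1; split; [lra|]. intros; rewrite Cabs_C0. pose proof (Cabs_nonneg t). nra. Qed.

Lemma o1_Csum m r : (forall k, (k < m)%nat -> o1 (r k)) -> o1 (fun t => Csum m (fun k => r k t)).
Proof.
  induction m; intros H; simpl.
  - apply o1_zero.
  - apply (o1_add (fun t => Csum m (fun k => r k t)) (r m)); [apply IHm; intros; apply H; lia| apply H; lia].
Qed.

Lemma van_o1 r : o1 r -> van r.
Proof.
  intros Hr eps He. eapply ev_mono; [|apply (ev_and _ _ (Hr 1 ltac:(lra)) (ev_small eps He))].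
  intros t [A B]. lra.
Qed.

Lemma van_add r s : van r -> van s -> van (fun t => Cadd (r t) (s t)).
Proof.
  intros Hr Hs eps Heps.
  eapply ev_mono; [|apply (ev_and _ _ (Hr (eps/2) ltac:(lra)) (Hs (eps/2) ltac:(lra)))].
  intros t [A B]. eapply Rle_trans; [apply Cabs_triangle|]. lra.
Qed.

Lemma van_lin c : van (fun t => Cmul c t).
Proof.
  intros eps He. exists (eps / (Cabs c + 1)). split.
  - apply Rdiv_lt_0_compat; [lra|]. pose proof (Cabs_nonneg c); lra.
  - intros t Ht. rewrite Cabs_mul. pose proof (Cabs_nonneg c); pose proof (Cabs_nonneg t).
    apply Rle_trans with ((Cabs c + 1) * Cabs t). { nra. }
    apply Rle_trans with ((Cabs c + 1) * (eps / (Cabs c + 1))). { apply Rmult_le_compat_l; lra. }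
    right; field; lra.
Qed.

Lemma van_ext r s : (forall t, r t = s t) -> van r -> van s.
Proof. intros E H eps He. eapply ev_mono; [|apply (H eps He)]. intros t; simpl; rewrite E; auto. Qed.

Lemma van_mul_bnd r s : van r -> bnd s -> van (fun t => Cmul (r t) (s t)).
Proof.
  intros Hr [K HK] eps Heps.
  set (K' := Rabs K + 1).
  assert (K' > 0) by (unfold K'; pose proof (Rabs_pos K); lra).
  eapply ev_mono; [|apply (ev_and _ _ (Hr (eps / K') ltac:(apply Rdiv_lt_0_compat; lra)) HK)].
  intros t [A B]. rewrite Cabs_mul.
  assert (Cabs (s t) <= K') by (unfold K'; pose proof (Rle_abs K); lra).
  pose proof (Cabs_nonneg (r t)); pose proof (Cabs_nonneg (s t)).
  apply Rle_trans with (eps / K' * K').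
  - apply Rmult_le_compat; auto.
  - right. field. lra.
Qed.

Lemma bnd_van_const r c : van r -> bnd (fun t => Cadd (r t) c).
Proof.
  intros Hr. exists (1 + Cabs c). eapply ev_mono; [|apply (Hr 1 ltac:(lra))].
  intros t H. eapply Rle_trans; [apply Cabs_triangle|]. lra.
Qed.

Definition D1 (f : Cplx -> Cplx) (c : Cplx) : Prop :=
  o1 (fun t => Csub (Csub (f t) (f C0)) (Cmul c t)).

Lemma D1_van f c : D1 f c -> van (fun t => Csub (f t) (f C0)).
Proof.
  intros H. apply (van_ext (fun t => Cadd (Csub (Csub (f t) (f C0)) (Cmul c t)) (Cmul c t))); [intros; ring|].
  apply van_add; [apply van_o1; auto| apply van_lin].
Qed.

Lemma D1_bnd f c : D1 f c -> bnd f.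
Proof.
  intros H. destruct (bnd_van_const _ (f C0) (D1_van f c H)) as [K HK].
  exists K. eapply ev_mono; [|apply HK]. intros t Ht; simpl in Ht. replace (Cadd (Csub (f t) (f C0)) (f C0)) with (f t) in Ht by ring. auto.
Qed.

Lemma D1_ext f g c : (forall t, f t = g t) -> D1 f c -> D1 g c.
Proof. intros E H. unfold D1 in *. eapply o1_ext; [|apply H]. intros; simpl; rewrite !E; reflexivity. Qed.

Lemma D1_ev f g c : ev (fun t => f t = g t) -> D1 f c -> D1 g c.
Proof.
  intros E H. assert (E0 : f C0 = g C0).
  { destruct E as [d [Hd HE]]. apply HE. rewrite Cabs_C0; lra. }
  eapply o1_ev; [|apply H]. eapply ev_mono; [|apply E]. intros t Ht. simpl. rewrite Ht, E0. reflexivity.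
Qed.

Lemma D1_const z : D1 (fun _ => z) C0.
Proof. apply (o1_ext (fun _ => C0)); [intros; ring| apply o1_zero]. Qed.

Lemma D1_id : D1 (fun t => t) C1.
Proof. apply (o1_ext (fun _ => C0)); [intros; ring| apply o1_zero]. Qed.

Lemma D1_add f g c1 c2 : D1 f c1 -> D1 g c2 -> D1 (fun t => Cadd (f t) (g t)) (Cadd c1 c2).
Proof. intros H1 H2. eapply o1_ext; [|apply (o1_add _ _ H1 H2)]. intros; simpl; ring. Qed.

Lemma D1_sub f g c1 c2 : D1 f c1 -> D1 g c2 -> D1 (fun t => Csub (f t) (g t)) (Csub c1 c2).
Proof. intros H1 H2. eapply o1_ext; [|apply (o1_sub _ _ H1 H2)]. intros; simpl; ring. Qed.

Lemma D1_scal k f c : D1 f c -> D1 (fun t => Cmul k (f t)) (Cmul k c).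
Proof. intros H1. eapply o1_ext; [|apply (o1_scal k _ H1)]. intros; simpl; ring. Qed.

Lemma D1_Csum m f c : (forall k, (k < m)%nat -> D1 (f k) (c k)) ->
  D1 (fun t => Csum m (fun k => f k t)) (Csum m c).
Proof.
  induction m; intros H; simpl.
  - apply D1_const.
  - apply (D1_add (fun t => Csum m (fun k => f k t)) (f m)); [apply IHm; intros; apply H; lia| apply H; lia].
Qed.

Lemma D1_mul f g c1 c2 : D1 f c1 -> D1 g c2 ->
  D1 (fun t => Cmul (f t) (g t)) (Cadd (Cmul c1 (g C0)) (Cmul (f C0) c2)).
Proof.
  intros H1 H2. unfold D1.
  apply (o1_ext (fun t => Cadd (Cadd (Cmul (Csub (Csub (f t) (f C0)) (Cmul c1 t)) (g t))
                                    (Cmul (Cmul c1 (Csub (g t) (g C0))) t))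
                              (Cmul (f C0) (Csub (Csub (g t) (g C0)) (Cmul c2 t))))).
  { intros; ring. }
  apply o1_add; [apply o1_add|].
  - apply o1_mul_bnd; auto. eapply D1_bnd; eauto.
  - apply o1_van_t. apply (van_ext (fun t => Cmul (Csub (g t) (g C0)) c1)); [intros; ring|].
    apply van_mul_bnd; [eapply D1_van; eauto|]. exists (Cabs c1); exists 1; split; [lra|]; intros; lra.
  - apply o1_scal; auto.
Qed.

Lemma ev_nonzero g c : D1 g c -> g C0 <> C0 -> ev (fun t => Cabs (g C0) / 2 <= Cabs (g t)).
Proof.
  intros H Hg. pose proof (Cabs_pos _ Hg).
  eapply ev_mono; [|apply (D1_van g c H (Cabs (g C0) / 2) ltac:(lra))].
  intros t Ht. pose proof (Cabs_rev_triangle (g C0) (g t)). rewrite Cabs_sub_sym in H1. lra.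
Qed.

Lemma D1_inv g c : D1 g c -> g C0 <> C0 ->
  D1 (fun t => Cinv (g t)) (Copp (Cdiv c (Cmul (g C0) (g C0)))).
Proof.
  intros H Hg. pose proof (Cabs_pos _ Hg) as Hpos. pose proof (ev_nonzero g c H Hg) as Hnz.
  unfold D1.
  apply (o1_ev (fun t => Cadd (Cmul (Copp (Csub (Csub (g t) (g C0)) (Cmul c t))) (Cinv (Cmul (g t) (g C0))))
                             (Cmul (Cmul (Cdiv c (Cmul (g C0) (g C0))) (Cmul (Csub (g t) (g C0)) (Cinv (g t)))) t))).
  { eapply ev_mono; [|apply Hnz]. intros t Ht; cbv beta in Ht |- *.
    assert (g t <> C0). { intro E. rewrite E, Cabs_C0 in Ht. lra. }
    field. auto. }
  apply o1_add.
  - apply o1_mul_bnd; [apply o1_opp; auto|]. exists (2 / (Cabs (g C0) * Cabs (g C0))).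
    eapply ev_mono; [|apply Hnz]. intros t Ht; cbv beta in Ht |- *.
    assert (g t <> C0). { intro E. rewrite E, Cabs_C0 in Ht. lra. }
    rewrite Cabs_inv by (apply Cmul_neq0; auto). rewrite Cabs_mul.
    pose proof (Cabs_pos _ H0).
    apply Rle_trans with (/ (Cabs (g C0) / 2 * Cabs (g C0))).
    + apply Rinv_le_contravar. { apply Rmult_lt_0_compat; lra. } apply Rmult_le_compat_r; lra.
    + right. field. lra.
  - apply o1_van_t. apply (van_ext (fun t => Cmul (Cmul (Csub (g t) (g C0)) (Cinv (g t))) (Cdiv c (Cmul (g C0) (g C0))))); [intros; ring|].
    apply van_mul_bnd; [|exists (Cabs (Cdiv c (Cmul (g C0) (g C0)))); exists 1; split; [lra|]; intros; lra].
    apply van_mul_bnd; [eapply D1_van; eauto|]. exists (2 / Cabs (g C0)).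
    eapply ev_mono; [|apply Hnz]. intros t Ht; cbv beta in Ht |- *.
    assert (g t <> C0). { intro E. rewrite E, Cabs_C0 in Ht. lra. }
    rewrite Cabs_inv by auto. pose proof (Cabs_pos _ H0).
    apply Rle_trans with (/ (Cabs (g C0) / 2)).
    + apply Rinv_le_contravar; lra.
    + right. field. lra.
Qed.

Lemma D1_div f g c1 c2 : D1 f c1 -> D1 g c2 -> g C0 <> C0 ->
  D1 (fun t => Cdiv (f t) (g t))
     (Cadd (Cmul c1 (Cinv (g C0))) (Cmul (f C0) (Copp (Cdiv c2 (Cmul (g C0) (g C0)))))).
Proof.
  intros H1 H2 Hg. unfold Cdiv at 1. apply (D1_mul f (fun t => Cinv (g t))); auto.
  apply D1_inv; auto.
Qed.

Lemma D1_scalvar f c d : D1 f c -> D1 (fun t => f (Cmul d t)) (Cmul c d).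
Proof.
  intros H eps He. set (K := Cabs d + 1). assert (K > 0) by (unfold K; pose proof (Cabs_nonneg d); lra).
  destruct (H (eps / K) ltac:(apply Rdiv_lt_0_compat; lra)) as [del [Hd HH]].
  exists (del / K). split; [apply Rdiv_lt_0_compat; lra|]. intros t Ht.
  assert (Cabs (Cmul d t) < del).
  { rewrite Cabs_mul. pose proof (Cabs_nonneg t). pose proof (Cabs_nonneg d).
    apply Rle_lt_trans with (K * Cabs t); [unfold K; nra|].
    apply Rlt_le_trans with (K * (del / K)); [apply Rmult_lt_compat_l; lra| right; field; lra]. }
  pose proof (HH _ H1). cbv beta. replace (Cmul d C0) with C0 by ring.
  replace (Cmul (Cmul c d) t) with (Cmul c (Cmul d t)) by ring.
  eapply Rle_trans; [apply H2|]. rewrite Cabs_mul. pose proof (Cabs_nonneg t). pose proof (Cabs_nonneg d).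
  apply Rle_trans with (eps / K * (K * Cabs t)).
  - apply Rmult_le_compat_l; [apply Rlt_le, Rdiv_lt_0_compat; lra| unfold K; nra].
  - right; field; lra.
Qed.

Lemma D1_unique f c1 c2 : D1 f c1 -> D1 f c2 -> c1 = c2.
Proof.
  intros H1 H2. assert (EE : Csub c1 c2 = C0).
  2:{ replace c1 with (Cadd (Csub c1 c2) c2) by ring. rewrite EE. ring. }
  apply Cabs_eq0. destruct (Rle_dec (Cabs (Csub c1 c2)) 0) as [Hle|Hgt].
  { pose proof (Cabs_nonneg (Csub c1 c2)); lra. }
  exfalso. set (e := Cabs (Csub c1 c2) / 4). assert (e > 0) by (unfold e; lra).
  destruct (ev_and _ _ (H1 e H) (H2 e H)) as [d [Hd HH]].
  set (t := RtoC (d / 2)).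
  assert (Ht : Cabs t = d / 2) by (unfold t; rewrite Cabs_RtoC; apply Rabs_right; lra).
  destruct (HH t ltac:(lra)) as [A B].
  assert (Cmul (Csub c1 c2) t = Csub (Csub (Csub (f t) (f C0)) (Cmul c2 t)) (Csub (Csub (f t) (f C0)) (Cmul c1 t))) by ring.
  pose proof (Cabs_sub_triangle (Csub (Csub (f t) (f C0)) (Cmul c2 t)) (Csub (Csub (f t) (f C0)) (Cmul c1 t))).
  rewrite <- H0, Cabs_mul, Ht in H3. unfold e in *. nra.
Qed.

Definition frechet (N : nat) (g : vec -> Cplx) (w0 a : vec) : Prop :=
  forall eps, eps > 0 -> exists delta, delta > 0 /\
    forall h, vnorm N h < delta ->
      Cabs (Csub (Csub (g (vadd w0 h)) (g w0)) (Csum N (fun k => Cmul (a k) (h k))))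
        <= eps * vnorm N h.

Lemma diff_frechet N g w : C_differentiable_at N g w -> exists a, frechet N g w a.
Proof. intros [a H]; exists a; exact H. Qed.

Lemma D1_chain N g w0 a (u : Cplx -> vec) (b : vec) :
  frechet N g w0 a -> u C0 = w0 -> (forall k, (k < N)%nat -> D1 (fun t => u t k) (b k)) ->
  D1 (fun t => g (u t)) (Csum N (fun k => Cmul (a k) (b k))).
Proof.
  intros Hg Hu0 Hu. unfold D1.
  set (h := fun t => vsub (u t) w0).
  assert (Euh : forall t, vadd w0 (h t) = u t).
  { intros t; extensionality k; unfold h, vadd, vsub; ring. }
  set (K := Rsumn N (fun k => Cabs (b k) + 1)).
  assert (HK : 0 <= K) by (apply Rsumn_nonneg; intros; pose proof (Cabs_nonneg (b k)); lra).
  assert (Hbound : ev (fun t => vnorm N (h t) <= K * Cabs t)).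
  { eapply ev_mono; [|apply (ev_fin N (fun k t => Cabs (Csub (Csub (u t k) (u C0 k)) (Cmul (b k) t)) <= 1 * Cabs t))].
    2: { intros k Hk; apply (Hu k Hk 1 ltac:(lra)). }
    intros t Ht. unfold vnorm, K. rewrite Rmult_comm, <- Rsumn_scal. apply Rsumn_le. intros k Hk.
    pose proof (Ht k Hk). cbv beta in H. unfold h, vsub. rewrite <- Hu0.
    pose proof (Cabs_triangle (Csub (Csub (u t k) (u C0 k)) (Cmul (b k) t)) (Cmul (b k) t)).
    replace (Cadd (Csub (Csub (u t k) (u C0 k)) (Cmul (b k) t)) (Cmul (b k) t)) with (Csub (u t k) (u C0 k)) in H0 by ring.
    rewrite Cabs_mul in H0. lra. }
  apply (o1_ext (fun t => Cadd (Csub (Csub (g (vadd w0 (h t))) (g w0)) (Csum N (fun k => Cmul (a k) (h t k))))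
                              (Csum N (fun k => Cmul (a k) (Csub (h t k) (Cmul (b k) t)))))).
  { intros t. rewrite Euh, Hu0. simpl.
    assert (Csum N (fun k => Cmul (a k) (Csub (h t k) (Cmul (b k) t))) =
            Csub (Csum N (fun k => Cmul (a k) (h t k))) (Cmul (Csum N (fun k => Cmul (a k) (b k))) t)).
    { rewrite <- Csum_scal_r, <- Csum_sub. apply Csum_ext; intros; ring. }
    rewrite H. ring. }
  apply o1_add.
  - intros eps He. destruct (Hg (eps / (K + 1)) ltac:(apply Rdiv_lt_0_compat; lra)) as [del [Hd HH]].
    eapply ev_mono; [|apply (ev_and _ _ Hbound (ev_small (del / (K+1)) ltac:(apply Rdiv_lt_0_compat; lra)))].
    intros t [B S]. pose proof (Cabs_nonneg t).
    assert (vnorm N (h t) < del).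
    { apply Rle_lt_trans with (K * Cabs t); auto.
      apply Rle_lt_trans with ((K+1) * Cabs t); [nra|].
      apply Rlt_le_trans with ((K+1) * (del / (K+1))); [apply Rmult_lt_compat_l; lra| right; field; lra]. }
    eapply Rle_trans; [apply HH; auto|].
    apply Rle_trans with (eps / (K+1) * (K * Cabs t)).
    + apply Rmult_le_compat_l; auto. apply Rlt_le, Rdiv_lt_0_compat; lra.
    + apply Rle_trans with (eps / (K + 1) * ((K+1) * Cabs t)).
      * apply Rmult_le_compat_l; [apply Rlt_le, Rdiv_lt_0_compat; lra| nra].
      * right; field; lra.
  - apply (o1_Csum N (fun k t => Cmul (a k) (Csub (h t k) (Cmul (b k) t)))). intros k Hk.
    apply o1_scal. eapply o1_ext; [|apply (Hu k Hk)]. intros t; simpl. unfold h, vsub. rewrite Hu0. reflexivity.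
Qed.
Lemma proj_eq_refl N v : proj_eq N v v.
Proof. exists C1; split; [apply C1_neq_C0|]. intros; ring. Qed.

Lemma proj_eq_sym N v w : proj_eq N v w -> proj_eq N w v.
Proof.
  intros [l [Hl H]]. exists (Cinv l); split; [apply Cinv_neq0; auto|].
  intros k Hk. rewrite H by auto. field; auto.
Qed.

Lemma proj_eq_trans N u v w : proj_eq N u v -> proj_eq N v w -> proj_eq N u w.
Proof.
  intros [l1 [H1 E1]] [l2 [H2 E2]]. exists (Cmul l2 l1); split; [apply Cmul_neq0; auto|].
  intros k Hk. rewrite E2, E1 by auto. ring.
Qed.

Lemma proj_eq_scal N v w l : l <> C0 -> (forall k, (k < N)%nat -> w k = Cmul l (v k)) -> proj_eq N v w.
Proof. intros; exists l; split; auto. Qed.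

Lemma nonzero_of N v a : (a < N)%nat -> v a <> C0 -> nonzero_vec N v.
Proof. intros; exists a; auto. Qed.

Lemma nonzero_proj N v w : nonzero_vec N v -> proj_eq N v w -> nonzero_vec N w.
Proof.
  intros [k [Hk Hv]] [l [Hl E]]. exists k; split; auto. rewrite E by auto. apply Cmul_neq0; auto.
Qed.

Lemma ratio_proj N F v w b : proj_map N F -> nonzero_vec N v -> proj_eq N v w -> (b < N)%nat ->
  F w b <> C0 -> F v b <> C0 /\ forall k, (k < N)%nat -> Cdiv (F w k) (F w b) = Cdiv (F v k) (F v b).
Proof.
  intros [_ HF] Hv Hvw Hb Hw. destruct (HF v w Hv Hvw) as [l [Hl E]].
  rewrite E in Hw by auto. assert (F v b <> C0) by (intro Z; apply Hw; rewrite Z; ring).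
  split; auto. intros k Hk. rewrite !E by auto. field; auto.
Qed.

Lemma chart_proj N v a : (a < N)%nat -> v a <> C0 -> proj_eq N v (chart_emb a (fun k => Cdiv (v k) (v a))).
Proof.
  intros Ha Hva. exists (Cinv (v a)); split; [apply Cinv_neq0; auto|].
  intros k Hk. unfold chart_emb. destruct (Nat.eqb_spec k a).
  - subst. field; auto.
  - unfold Cdiv; ring.
Qed.

Lemma Rsumn_const m c : Rsumn m (fun _ => c) = INR m * c.
Proof. induction m; simpl Rsumn; [simpl; ring|]. rewrite IHm, S_INR. ring. Qed.

Lemma vnorm_zero N h : (forall k, (k < N)%nat -> h k = C0) -> vnorm N h = 0.
Proof.
  intros H. unfold vnorm. rewrite (Rsumn_ext N _ (fun _ => 0)). { rewrite Rsumn_const; ring. }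
  intros; rewrite H, Cabs_C0; auto.
Qed.

Lemma vcurve_cont N (u : Cplx -> vec) (b : vec) :
  (forall k, (k < N)%nat -> D1 (fun t => u t k) (b k)) ->
  forall e, e > 0 -> ev (fun t => vnorm N (vsub (u t) (u C0)) < e).
Proof.
  intros H e He. pose proof (pos_INR N).
  eapply ev_mono; [|apply (ev_fin N (fun k t => Cabs (Csub (u t k) (u C0 k)) <= e / (INR N + 1)))].
  2: { intros k Hk. apply (D1_van _ _ (H k Hk)). apply Rdiv_lt_0_compat; lra. }
  intros t Ht. unfold vnorm, vsub.
  apply Rle_lt_trans with (Rsumn N (fun _ => e / (INR N + 1))).
  - apply Rsumn_le; intros; apply Ht; auto.
  - rewrite Rsumn_const. apply Rlt_le_trans with ((INR N + 1) * (e / (INR N + 1))).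
    + apply Rmult_lt_compat_r; [apply Rdiv_lt_0_compat|]; lra.
    + right; field; lra.
Qed.

Lemma ev_neq0 g c : D1 g c -> g C0 <> C0 -> ev (fun t => g t <> C0).
Proof.
  intros H Hg. pose proof (Cabs_pos _ Hg). eapply ev_mono; [|apply (ev_nonzero g c H Hg)].
  intros t Ht E. cbv beta in Ht. rewrite E, Cabs_C0 in Ht. lra.
Qed.

Lemma ev_true (P : Cplx -> Prop) : (forall t, P t) -> ev P.
Proof. intros; exists 1; split; [lra|]; auto. Qed.

Lemma ev_at0 P : ev P -> P C0.
Proof. intros [d [Hd H]]; apply H; rewrite Cabs_C0; lra. Qed.

Lemma ev_scal (P : Cplx -> Prop) d : ev P -> ev (fun t => P (Cmul d t)).
Proof.
  intros [del [Hd H]]. exists (del / (Cabs d + 1)). pose proof (Cabs_nonneg d). split.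
  - apply Rdiv_lt_0_compat; lra.
  - intros t Ht. apply H. rewrite Cabs_mul. pose proof (Cabs_nonneg t).
    apply Rle_lt_trans with ((Cabs d + 1) * Cabs t); [nra|].
    apply Rlt_le_trans with ((Cabs d + 1) * (del / (Cabs d + 1))); [apply Rmult_lt_compat_l; lra| right; field; lra].
Qed.

Lemma D1_eqc f c c' : D1 f c -> c = c' -> D1 f c'.
Proof. intros H E; subst; auto. Qed.

Lemma chart_curve N F v0 a b (c : Cplx -> vec) (beta : vec) :
  proj_map N F -> holo_proj N F -> (a < N)%nat -> (b < N)%nat -> v0 a <> C0 -> F v0 b <> C0 ->
  c C0 = v0 -> (forall k, (k < N)%nat -> D1 (fun t => c t k) (beta k)) ->
  exists (Rf : nat -> Cplx -> Cplx) (gam : nat -> Cplx),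
    (forall k, (k < N)%nat -> D1 (Rf k) (gam k)) /\
    ((forall k, (k < N)%nat -> beta k = C0) -> forall k, (k < N)%nat -> gam k = C0) /\
    ev (fun t => F (c t) b <> C0 /\ forall k, (k < N)%nat -> Rf k t = Cdiv (F (c t) k) (F (c t) b)).
Proof.
  intros HPM HH Ha Hb Hva HFb Hc0 Hc.
  pose proof (HH v0 a b Ha Hb Hva HFb) as Hh. cbv zeta in Hh.
  destruct Hh as [d1 [Hd1 Hh]].
  set (w0 := fun k => Cdiv (v0 k) (v0 a)) in *.
  set (u := fun t => fun k => Cdiv (c t k) (c t a)).
  assert (Hu0 : u C0 = w0). { unfold u, w0; rewrite Hc0; reflexivity. }
  assert (Hca : c C0 a <> C0) by (rewrite Hc0; auto).
  set (beta' := fun k => Cadd (Cmul (beta k) (Cinv (c C0 a))) (Cmul (c C0 k) (Copp (Cdiv (beta a) (Cmul (c C0 a) (c C0 a)))))).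
  assert (Hu : forall k, (k < N)%nat -> D1 (fun t => u t k) (beta' k)).
  { intros k Hk. unfold u, beta'. apply (D1_div (fun t => c t k) (fun t => c t a)); auto. }
  assert (Hw0 : vnorm N (vsub w0 w0) < d1).
  { rewrite vnorm_zero; auto. intros; unfold vsub; ring. }
  destruct (Hh w0 Hw0) as [_ Hdiff].
  set (R := fun k w => Cdiv (F (chart_emb a w) k) (F (chart_emb a w) b)).
  assert (Hfr : forall k, (k < N)%nat -> exists al, frechet N (R k) w0 al).
  { intros k Hk. apply diff_frechet. apply Hdiff; auto. }
  assert (Hfr' : exists al : nat -> vec, forall k, (k < N)%nat -> frechet N (R k) w0 (al k)).
  { assert (forall k, exists al, (k < N)%nat -> frechet N (R k) w0 al).
    { intros k. destruct (Nat.lt_ge_cases k N) as [Hk|Hk].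
      - destruct (Hfr k Hk) as [al H]; exists al; auto.
      - exists (fun _ => C0); intros; lia. }
    exists (fun k => proj1_sig (constructive_indefinite_description _ (H k))).
    intros k Hk. exact (proj2_sig (constructive_indefinite_description _ (H k)) Hk). }
  destruct Hfr' as [al Hal].
  exists (fun k t => R k (u t)), (fun k => Csum N (fun l => Cmul (al k l) (beta' l))).
  split; [|split].
  - intros k Hk. apply (D1_chain N (R k) w0 (al k) u beta'); auto.
  - intros Hz k Hk. apply Csum_zero. intros l Hl. unfold beta'. rewrite !Hz by auto.
    field; auto.
  - assert (Hcont := vcurve_cont N u beta' Hu d1 Hd1). rewrite Hu0 in Hcont.
    eapply ev_mono; [|apply (ev_and _ _ Hcont (ev_neq0 _ _ (Hc a Ha) Hca))].
    intros t [Ht1 Ht2]. cbv beta in Ht1, Ht2.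
    destruct (Hh (u t) Ht1) as [Hnz _].
    assert (Hnv : nonzero_vec N (c t)) by (exists a; auto).
    destruct (ratio_proj N F (c t) (chart_emb a (u t)) b HPM Hnv (chart_proj N (c t) a Ha Ht2) Hb Hnz) as [H1 H2].
    split; auto.
Qed.
Definition phi (Sm : mat) (n j : nat) (t : Cplx) : vec :=
  fun k => Cadd (Sm k n) (Cmul t (Sm k j)).

Lemma phi_Sinv N Sm Sinv n j t i : mat_inverse N Sm Sinv -> (i < N)%nat -> (j < N)%nat -> (n < N)%nat ->
  mulmv N Sinv (phi Sm n j t) i = Cadd (idm i n) (Cmul t (idm i j)).
Proof.
  intros H Hi Hj Hn. unfold mulmv, phi.
  rewrite (Csum_ext N _ (fun k => Cadd (Cmul (Sinv i k) (Sm k n)) (Cmul t (Cmul (Sinv i k) (Sm k j))))) by (intros; ring).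
  rewrite Csum_add, Csum_scal. fold (mulmm N Sinv Sm i n). fold (mulmm N Sinv Sm i j).
  rewrite (proj2 (H i n Hi Hn)), (proj2 (H i j Hi Hj)). reflexivity.
Qed.

Lemma phi_nonzero N Sm Sinv n j t : mat_inverse N Sm Sinv -> (j < N)%nat -> (n < N)%nat -> j <> n ->
  nonzero_vec N (phi Sm n j t).
Proof.
  intros H Hj Hn Hjn. apply NNPP. intro Hnz.
  assert (Hz : forall k, (k < N)%nat -> phi Sm n j t k = C0).
  { intros k Hk. apply NNPP; intro E. apply Hnz; exists k; auto. }
  pose proof (phi_Sinv N Sm Sinv n j t n H Hn Hj Hn) as E.
  rewrite (mulmv_ext N Sinv _ (fun _ => C0)) in E by auto.
  unfold mulmv in E. rewrite Csum_zero in E by (intros; ring).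
  unfold idm in E. rewrite Nat.eqb_refl in E. destruct (Nat.eqb_spec n j); [lia|].
  apply C1_neq_C0. rewrite E. ring.
Qed.

Lemma phi_P N Sm Sinv n j (pr : vec) t i : mat_inverse N Sm Sinv -> (i < N)%nat -> (j < N)%nat -> (n < N)%nat ->
  j <> n -> pr n <> C0 ->
  mulmv N (conj_diag N Sm Sinv pr) (phi Sm n j t) i = Cmul (pr n) (phi Sm n j (Cmul (Cdiv (pr j) (pr n)) t) i).
Proof.
  intros H Hi Hj Hn Hjn Hp. rewrite conj_diag_apply by auto.
  rewrite (mulmv_ext N Sm _ (fun k => Cadd (Cmul (pr k) (idm k n)) (Cmul t (Cmul (pr k) (idm k j))))).
  2: { intros k Hk. rewrite phi_Sinv by auto. ring. }
  rewrite mulmv_add, mulmv_scal.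
  unfold mulmv. rewrite (Csum_single N _ n Hn), (Csum_single N _ j Hj).
  - unfold idm, phi. rewrite !Nat.eqb_refl. field. auto.
  - intros k Hk Hkj. unfold idm. destruct (Nat.eqb_spec k j); [lia|]. ring.
  - intros k Hk Hkj. unfold idm. destruct (Nat.eqb_spec k n); [lia|]. ring.
Qed.

Lemma Tinv_Q N Tm Tinv (qr : vec) w i : mat_inverse N Tm Tinv -> (i < N)%nat ->
  mulmv N Tinv (mulmv N (conj_diag N Tm Tinv qr) w) i = Cmul (qr i) (mulmv N Tinv w i).
Proof.
  intros H Hi.
  rewrite (mulmv_ext N Tinv _ (mulmv N Tm (fun k => Cmul (qr k) (mulmv N Tinv w k)))).
  - apply (mulmv_inv_l N Tm Tinv (fun k => Cmul (qr k) (mulmv N Tinv w k)) i H Hi).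
  - intros; apply conj_diag_apply; auto.
Qed.

Lemma sum_ratio N (M : mat) (f : vec) (c : Cplx) i :
  Csum N (fun k => Cmul (M i k) (Cdiv (f k) c)) = Cdiv (mulmv N M f i) c.
Proof. unfold Cdiv at 2, mulmv. rewrite <- Csum_scal_r. apply Csum_ext; intros; unfold Cdiv; ring. Qed.
Lemma stepB (n : nat) (I : Type) (Sm Sinv Tm Tinv : mat) (p q : I -> nat -> Cplx)
  (HS : mat_inverse (Datatypes.S n) Sm Sinv) (HT : mat_inverse (Datatypes.S n) Tm Tinv)
  (Hp : forall r k, (k <= n)%nat -> p r k <> C0) (Hq : forall r k, (k <= n)%nat -> q r k <> C0)
  (F G : vec -> vec) (HB : biholo_proj (Datatypes.S n) F G)
  (Hcomm : forall r v, nonzero_vec (Datatypes.S n) v ->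
     proj_eq (Datatypes.S n) (F (mulmv (Datatypes.S n) (conj_diag (Datatypes.S n) Sm Sinv (p r)) v))
       (mulmv (Datatypes.S n) (conj_diag (Datatypes.S n) Tm Tinv (q r)) (F v)))
  (m : nat) (Hm : (m < Datatypes.S n)%nat)
  (HVm : mulmv (Datatypes.S n) Tinv (F (fun k => Sm k n)) m <> C0)
  (j : nat) (Hj : (j < n)%nat) :
  exists i, (i < Datatypes.S n)%nat /\ forall r, Cdiv (q r i) (q r m) = Cdiv (p r j) (p r n).
Proof.
  set (N := Datatypes.S n) in *.
  assert (HnN : (n < N)%nat) by (unfold N; lia).
  assert (HjN : (j < N)%nat) by (unfold N; lia).
  assert (Hjn : j <> n) by lia.
  destruct HB as [HPF [HPG [HGF [HFG [HHF HHG]]]]].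
  set (x := fun k => Sm k n) in *.
  assert (Hphi0 : phi Sm n j C0 = x) by (extensionality k; unfold phi, x; ring).
  assert (Hxnz : nonzero_vec N x) by (rewrite <- Hphi0; apply phi_nonzero with Sinv; auto).
  destruct Hxnz as [a [Ha Hxa]].
  assert (HFxnz : nonzero_vec N (F x)) by (apply (proj1 HPF); exists a; auto).
  destruct HFxnz as [b [Hb HFxb]].
  assert (Hphid : forall k, (k < N)%nat -> D1 (fun t => phi Sm n j t k) (Sm k j)).
  { intros k Hk. apply (D1_ext (fun t => Cadd (Sm k n) (Cmul (Sm k j) t))); [intros; unfold phi; ring|].
    eapply D1_eqc; [apply D1_add; [apply D1_const| apply D1_scal, D1_id]| ring]. }
  destruct (chart_curve N F x a b (phi Sm n j) (fun k => Sm k j) HPF HHF Ha Hb Hxa HFxb Hphi0 Hphid)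
    as [Rf [gam [HRf [_ Hev1]]]].
  set (Y := fun t i => Csum N (fun k => Cmul (Tinv i k) (Rf k t))).
  assert (HY : forall i, D1 (fun t => Y t i) (Csum N (fun k => Cmul (Tinv i k) (gam k)))).
  { intros i. apply (D1_Csum N (fun k t => Cmul (Tinv i k) (Rf k t))). intros k Hk. apply D1_scal; auto. }
  set (V := fun t => mulmv N Tinv (F (phi Sm n j t))).
  assert (HYV : ev (fun t => F (phi Sm n j t) b <> C0 /\ forall i, Y t i = Cdiv (V t i) (F (phi Sm n j t) b))).
  { eapply ev_mono; [|apply Hev1]. intros t [H1 H2]. split; auto. intros i. unfold Y, V.
    rewrite <- sum_ratio. apply Csum_ext. intros k Hk. rewrite H2; auto. }
  assert (HY0 : Y C0 m <> C0).
  { destruct (ev_at0 _ HYV) as [H1 H2]. rewrite H2. apply Cdiv_neq0; auto. unfold V. rewrite Hphi0. auto. }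
  set (y := fun t i => Cdiv (Y t i) (Y t m)).
  set (A := fun i => Cadd (Cmul (Csum N (fun k => Cmul (Tinv i k) (gam k))) (Cinv (Y C0 m))) (Cmul (Y C0 i) (Copp (Cdiv (Csum N (fun k => Cmul (Tinv m k) (gam k))) (Cmul (Y C0 m) (Y C0 m)))))).
  assert (Hy : forall i, D1 (fun t => y t i) (A i)).
  { intros i. unfold y, A. apply (D1_div (fun t => Y t i) (fun t => Y t m)); auto. }
  set (good := fun t => (F (phi Sm n j t) b <> C0 /\ forall i, Y t i = Cdiv (V t i) (F (phi Sm n j t) b)) /\ Y t m <> C0).
  assert (Hgood : ev good) by (apply ev_and; auto; eapply ev_neq0; eauto).
  assert (Hyv : forall t, good t -> V t m <> C0 /\ forall i, y t i = Cdiv (V t i) (V t m)).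
  { intros t [[H1 H2] H3]. unfold y. rewrite H2 in H3.
    assert (V t m <> C0) by (intro E; apply H3; rewrite E; unfold Cdiv; ring).
    split; auto. intros i. rewrite !H2. field. auto. }
  assert (Hrel : forall r i, (i < N)%nat -> Cmul (A i) (Cdiv (p r j) (p r n)) = Cmul (Cdiv (q r i) (q r m)) (A i)).
  { intros r i Hi. set (d := Cdiv (p r j) (p r n)). set (e := Cdiv (q r i) (q r m)).
    apply (D1_unique (fun t => Cmul e (y t i))).
    2: { apply D1_scal; auto. }
    apply (D1_ev (fun t => y (Cmul d t) i)); [| apply (D1_scalvar (fun t => y t i)); auto].
    eapply ev_mono; [|apply (ev_and _ _ Hgood (ev_scal _ d Hgood))].
    intros t [G1 G2]. cbv beta in G1, G2 |- *.
    destruct (Hyv t G1) as [Vm1 Hy1]. destruct (Hyv _ G2) as [Vm2 Hy2].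
    rewrite Hy1, Hy2.
    assert (Hpr : proj_eq N (mulmv N (conj_diag N Sm Sinv (p r)) (phi Sm n j t)) (phi Sm n j (Cmul d t))).
    { apply (proj_eq_scal _ _ _ (Cinv (p r n))). apply Cinv_neq0, Hp; lia.
      intros k Hk. rewrite phi_P by (auto; apply Hp; lia). fold d. field. apply Hp; lia. }
    assert (Hnzphi : nonzero_vec N (phi Sm n j t)) by (apply phi_nonzero with Sinv; auto).
    assert (Hnzp : nonzero_vec N (mulmv N (conj_diag N Sm Sinv (p r)) (phi Sm n j t))).
    { apply nonzero_proj with (phi Sm n j (Cmul d t)); [apply phi_nonzero with Sinv; auto| apply proj_eq_sym; auto]. }
    pose proof ((proj2 HPF) _ _ Hnzp Hpr) as H1.
    pose proof (Hcomm r _ Hnzphi) as H2.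
    destruct (proj_eq_trans _ _ _ _ (proj_eq_sym _ _ _ H2) H1) as [c [Hc Ec]].
    assert (HV : forall i', (i' < N)%nat -> V (Cmul d t) i' = Cmul c (Cmul (q r i') (V t i'))).
    { intros i' Hi'. unfold V.
      rewrite (mulmv_ext N Tinv _ (fun k => Cmul c (mulmv N (conj_diag N Tm Tinv (q r)) (F (phi Sm n j t)) k))) by auto.
      rewrite mulmv_scal. rewrite Tinv_Q by auto. reflexivity. }
    rewrite !HV by auto. unfold e.
    assert (q r m <> C0) by (apply Hq; unfold N in Hm; lia).
    field. repeat split; auto. }
  destruct (classic (exists i, (i < N)%nat /\ A i <> C0)) as [[i [Hi HAi]] | Hno].
  { exists i; split; auto. intros r. pose proof (Hrel r i Hi) as E.
    assert (q r m <> C0) by (apply Hq; unfold N in Hm; lia).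
    assert (p r n <> C0) by (apply Hp; lia).
    replace (Cdiv (q r i) (q r m)) with (Cdiv (Cmul (Cdiv (q r i) (q r m)) (A i)) (A i)) by (field; split; auto).
    rewrite <- E. field; split; auto. }
  exfalso.
  assert (HA0 : forall i, (i < N)%nat -> A i = C0) by (intros i Hi; apply NNPP; intro; apply Hno; exists i; auto).
  set (rho := fun t k => Csum N (fun l => Cmul (Tm k l) (y t l))).
  assert (Hrho : forall k, (k < N)%nat -> D1 (fun t => rho t k) ((fun _ => C0) k)).
  { intros k Hk. apply (D1_eqc _ (Csum N (fun l => Cmul (Tm k l) (A l)))).
    - apply (D1_Csum N (fun l t => Cmul (Tm k l) (y t l))). intros l Hl; apply D1_scal; apply Hy.
    - apply Csum_zero. intros l Hl. rewrite HA0 by auto. ring. }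
  assert (Hrhot : forall t, good t -> forall k, (k < N)%nat -> rho t k = Cmul (Cinv (V t m)) (F (phi Sm n j t) k)).
  { intros t Gt k Hk. destruct (Hyv t Gt) as [Vm Hyt]. unfold rho.
    rewrite (Csum_ext N _ (fun l => Cmul (Tm k l) (Cdiv (V t l) (V t m)))) by (intros; rewrite Hyt; auto).
    rewrite sum_ratio. unfold V. rewrite mulmv_inv_r by auto. unfold Cdiv; ring. }
  assert (Hg0 : good C0) by (apply ev_at0; auto).
  assert (Hrho0b : rho C0 b <> C0).
  { rewrite Hrhot by auto. apply Cmul_neq0. apply Cinv_neq0, Hyv; auto. rewrite Hphi0; auto. }
  assert (Hrhonz : nonzero_vec N (rho C0)) by (exists b; auto).
  destruct ((proj1 HPG) _ Hrhonz) as [b' [Hb' HGb']].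
  destruct (chart_curve N G (rho C0) b b' rho (fun _ => C0) HPG HHG Hb Hb' Hrho0b HGb' eq_refl Hrho)
    as [Rf' [gam' [HRf' [Hz' Hev2]]]].
  assert (Hgam' : forall k, (k < N)%nat -> gam' k = C0) by (apply Hz'; auto).
  set (Z := fun t i => Csum N (fun k => Cmul (Sinv i k) (Rf' k t))).
  assert (HZ : forall i, D1 (fun t => Z t i) C0).
  { intros i. apply (D1_eqc _ (Csum N (fun k => Cmul (Sinv i k) (gam' k)))).
    - apply (D1_Csum N (fun k t => Cmul (Sinv i k) (Rf' k t))). intros k Hk. apply D1_scal; auto.
    - apply Csum_zero. intros k Hk. rewrite Hgam' by auto. ring. }
  assert (HZrel : forall t, good t -> (G (rho t) b' <> C0 /\ forall k, (k < N)%nat -> Rf' k t = Cdiv (G (rho t) k) (G (rho t) b')) ->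
     exists c', c' <> C0 /\ Z t j = Cmul c' t /\ Z t n = c').
  { intros t Gt [HG1 HG2].
    assert (Hnzphi : nonzero_vec N (phi Sm n j t)) by (apply phi_nonzero with Sinv; auto).
    assert (HFnz : nonzero_vec N (F (phi Sm n j t))) by (apply (proj1 HPF); auto).
    assert (Hfr : proj_eq N (F (phi Sm n j t)) (rho t)).
    { apply (proj_eq_scal _ _ _ (Cinv (V t m))); [apply Cinv_neq0, Hyv; auto| apply Hrhot; auto]. }
    destruct (proj_eq_trans _ _ _ _ (HGF _ Hnzphi) ((proj2 HPG) _ _ HFnz Hfr)) as [c [Hc Ec]].
    assert (HZi : forall i, (i < N)%nat -> Z t i = Cmul (Cdiv c (G (rho t) b')) (Cadd (idm i n) (Cmul t (idm i j)))).
    { intros i Hi. unfold Z. rewrite (Csum_ext N _ (fun k => Cmul (Sinv i k) (Cdiv (G (rho t) k) (G (rho t) b')))) by (intros; rewrite HG2; auto).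
      rewrite sum_ratio. rewrite (mulmv_ext N Sinv _ (fun k => Cmul c (phi Sm n j t k))) by auto.
      rewrite mulmv_scal, phi_Sinv by auto. unfold Cdiv; ring. }
    exists (Cdiv c (G (rho t) b')). split; [apply Cdiv_neq0; auto|]. split.
    - rewrite HZi by auto. unfold idm. rewrite Nat.eqb_refl. destruct (Nat.eqb_spec j n); [lia|]. ring.
    - rewrite HZi by auto. unfold idm. rewrite Nat.eqb_refl. destruct (Nat.eqb_spec n j); [lia|]. ring. }
  assert (Hgood2 : ev (fun t => good t /\ (G (rho t) b' <> C0 /\ forall k, (k < N)%nat -> Rf' k t = Cdiv (G (rho t) k) (G (rho t) b')))) by (apply ev_and; auto).
  assert (HZ0 : Z C0 n <> C0).
  { destruct (ev_at0 _ Hgood2) as [G1 G2]. destruct (HZrel _ G1 G2) as [c' [Hc' [_ E]]]. rewrite E; auto. }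
  pose proof (D1_div (fun t => Z t j) (fun t => Z t n) C0 C0 (HZ j) (HZ n) HZ0) as Hq0.
  assert (Hid : D1 (fun t => t) C0).
  { apply (D1_ev (fun t => Cdiv (Z t j) (Z t n))).
    - eapply ev_mono; [|apply Hgood2]. intros t [G1 G2]. destruct (HZrel _ G1 G2) as [c' [Hc' [E1 E2]]].
      cbv beta. rewrite E1, E2. field; auto.
    - eapply D1_eqc; [apply Hq0|]. field; auto. }
  apply C1_neq_C0. apply (D1_unique (fun t => t)); auto. apply D1_id.
Qed.
Lemma Cln_C1 : Cln C1 = C0.
Proof.
  unfold Cln, Cabs, Arg, Cnorm2, C1, C0; simpl.
  replace (1*1+0*0) with 1 by ring. rewrite sqrt_1, ln_1.
  destruct (Rlt_dec 0 1); [|lra]. replace (0/1) with 0 by field. rewrite atan_0. reflexivity.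
Qed.

Lemma simple_facts n (lam : nat -> Cplx) : simple_set n (fun k => Cln (lam k)) ->
  (forall k, (k < n)%nat -> lam k <> C1) /\
  (forall k l, (k < n)%nat -> (l < n)%nat -> lam k = lam l -> k = l).
Proof.
  intros [H1 H2]. split.
  - intros k Hk E. apply (H1 k Hk). cbv beta. rewrite E. apply Cln_C1.
  - intros k l Hk Hl E. destruct (Nat.eq_dec k l); auto. exfalso.
    destruct (H2 k l Hk Hl n0 1%nat ltac:(lia)) as [A _]. apply A. cbv beta. rewrite E.
    replace (RtoC (INR 1)) with C1 by (apply Cext; simpl; auto).
    field. rewrite <- E. apply (H1 k Hk).
Qed.

Lemma forward (n : nat) (Hn : (1 < n)%nat) (I : Type) (Sm Sinv Tm Tinv : mat) (p q : I -> nat -> Cplx)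
  (HS : mat_inverse (Datatypes.S n) Sm Sinv) (HT : mat_inverse (Datatypes.S n) Tm Tinv)
  (Hp : forall r k, (k <= n)%nat -> p r k <> C0) (Hq : forall r k, (k <= n)%nat -> q r k <> C0)
  (Hsp : forall r, simple_set n (fun k => Cln (Cdiv (p r k) (p r n)))) :
  (exists F G : vec -> vec,
     biholo_proj (Datatypes.S n) F G /\
     forall (r : I) (v : vec), nonzero_vec (Datatypes.S n) v ->
       proj_eq (Datatypes.S n)
         (F (mulmv (Datatypes.S n) (conj_diag (Datatypes.S n) Sm Sinv (p r)) v))
         (mulmv (Datatypes.S n) (conj_diag (Datatypes.S n) Tm Tinv (q r)) (F v))) ->
  (exists rho : nat -> nat, is_perm (Datatypes.S n) rho /\
     forall (r : I) (k : nat), (k < n)%nat ->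
       Cdiv (q r (rho k)) (q r (rho n)) = Cdiv (p r k) (p r n)).
Proof.
  intros [F [G [HB Hcomm]]].
  set (N := Datatypes.S n) in *.
  destruct (classic (inhabited I)) as [[r0]|HI].
  2: { exists (fun k => k). split; [split; auto|]. intros r; exfalso; apply HI; constructor; exact r. }
  assert (HnN : (n < N)%nat) by (unfold N; lia).
  set (x := fun k => Sm k n).
  assert (Hxnz : nonzero_vec N x).
  { replace x with (phi Sm n 0 C0) by (extensionality k; unfold phi, x; ring).
    apply phi_nonzero with Sinv; auto; unfold N; lia. }
  assert (HFx : nonzero_vec N (F x)) by (apply (proj1 (proj1 HB)); auto).
  assert (Hm : exists m, (m < N)%nat /\ mulmv N Tinv (F x) m <> C0).
  { apply NNPP; intro Hno. destruct HFx as [k [Hk Hk']]. apply Hk'.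
    rewrite <- (mulmv_inv_r N Tm Tinv (F x) k HT Hk).
    rewrite (mulmv_ext N Tm _ (fun _ => C0)). { unfold mulmv; apply Csum_zero; intros; ring. }
    intros l Hl. apply NNPP; intro; apply Hno; exists l; auto. }
  destruct Hm as [m [Hm HVm]].
  assert (Htau : forall j, exists i, (j < n)%nat -> (i < N)%nat /\ forall r, Cdiv (q r i) (q r m) = Cdiv (p r j) (p r n)).
  { intros j. destruct (Nat.lt_ge_cases j n) as [Hj|Hj].
    - destruct (stepB n I Sm Sinv Tm Tinv p q HS HT Hp Hq F G HB Hcomm m Hm HVm j Hj) as [i Hi].
      exists i; auto.
    - exists 0%nat; intros; lia. }
  set (tau := fun j => proj1_sig (constructive_indefinite_description _ (Htau j))).
  assert (Htau' : forall j, (j < n)%nat -> (tau j < N)%nat /\ forall r, Cdiv (q r (tau j)) (q r m) = Cdiv (p r j) (p r n)).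
  { intros j Hj. exact (proj2_sig (constructive_indefinite_description _ (Htau j)) Hj). }
  destruct (simple_facts n _ (Hsp r0)) as [D1' D2'].
  assert (Hqm : q r0 m <> C0) by (apply Hq; unfold N in Hm; lia).
  exists (fun k => if Nat.ltb k n then tau k else m). split; [split|].
  - intros k Hk. destruct (Nat.ltb_spec k n); [apply Htau'; auto| auto].
  - intros k l Hk Hl E. destruct (Nat.ltb_spec k n); destruct (Nat.ltb_spec l n).
    + apply D2'; auto. rewrite <- (proj2 (Htau' k H) r0), <- (proj2 (Htau' l H0) r0), E. reflexivity.
    + exfalso. apply (D1' k H). rewrite <- (proj2 (Htau' k H) r0), E. field; auto.
    + exfalso. apply (D1' l H0). rewrite <- (proj2 (Htau' l H0) r0), <- E. field; auto.
    + unfold N in Hk, Hl. lia.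
  - intros r k Hk. destruct (Nat.ltb_spec k n); [|lia]. destruct (Nat.ltb_spec n n); [lia|].
    apply Htau'; auto.
Qed.
Lemma quot_affine N (f0 g0 : Cplx) (al be : vec) : g0 <> C0 ->
  forall eps, eps > 0 -> exists delta, delta > 0 /\ forall h, vnorm N h < delta ->
    Cadd g0 (Csum N (fun k => Cmul (be k) (h k))) <> C0 /\
    Cabs (Csub (Csub (Cdiv (Cadd f0 (Csum N (fun k => Cmul (al k) (h k))))
                           (Cadd g0 (Csum N (fun k => Cmul (be k) (h k)))))
                     (Cdiv f0 g0))
               (Csum N (fun k => Cmul (Cdiv (Csub (Cmul (al k) g0) (Cmul f0 (be k))) (Cmul g0 g0)) (h k))))
      <= eps * vnorm N h.
Proof.
  intros Hg0 eps He.
  set (A := Rsumn N (fun k => Cabs (al k))). set (B := Rsumn N (fun k => Cabs (be k))).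
  assert (HA : 0 <= A) by (apply Rsumn_nonneg; intros; apply Cabs_nonneg).
  assert (HB : 0 <= B) by (apply Rsumn_nonneg; intros; apply Cabs_nonneg).
  pose proof (Cabs_pos _ Hg0) as Hg0p. set (a0 := Cabs g0) in *.
  set (K := Cabs f0 * B + a0 * A).
  assert (HK : 0 <= K) by (unfold K; pose proof (Cabs_nonneg f0); nra).
  set (C := 2 * B * K / (a0 * a0 * a0)).
  assert (HC : 0 <= C) by (unfold C; apply Rmult_le_pos; [nra| apply Rlt_le, Rinv_0_lt_compat; apply Rmult_lt_0_compat; nra]).
  exists (Rmin (a0 / (2 * (B + 1))) (eps / (C + 1))). split.
  { apply Rmin_Rgt_r; split; apply Rdiv_lt_0_compat; lra. }
  intros h Hh. set (v := vnorm N h) in *. pose proof (vnorm_nonneg N h) as Hv. fold v in Hv.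
  pose proof (Rmin_l (a0 / (2 * (B + 1))) (eps / (C + 1))). pose proof (Rmin_r (a0 / (2 * (B + 1))) (eps / (C + 1))).
  set (s1 := Csum N (fun k => Cmul (al k) (h k))). set (s2 := Csum N (fun k => Cmul (be k) (h k))).
  assert (Hs1 : Cabs s1 <= A * v) by apply Csum_lin_bound.
  assert (Hs2 : Cabs s2 <= B * v) by apply Csum_lin_bound.
  assert (Hs2' : Cabs s2 <= a0 / 2).
  { apply Rle_trans with (B * v); auto.
    apply Rle_trans with ((B + 1) * (a0 / (2 * (B + 1)))); [apply Rmult_le_compat; lra| right; field; lra]. }
  assert (Hg : a0 / 2 <= Cabs (Cadd g0 s2)).
  { pose proof (Cabs_rev_triangle g0 (Copp s2)). rewrite Cabs_opp in H1.
    replace (Csub g0 (Copp s2)) with (Cadd g0 s2) in H1 by ring. fold a0 in H1. lra. }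
  assert (Hgnz : Cadd g0 s2 <> C0) by (intro E; rewrite E, Cabs_C0 in Hg; lra).
  split; auto.
  assert (Hsum : Csum N (fun k => Cmul (Cdiv (Csub (Cmul (al k) g0) (Cmul f0 (be k))) (Cmul g0 g0)) (h k))
              = Cdiv (Csub (Cmul s1 g0) (Cmul f0 s2)) (Cmul g0 g0)).
  { transitivity (Csum N (fun k => Cmul (Cinv (Cmul g0 g0)) (Csub (Cmul g0 (Cmul (al k) (h k))) (Cmul f0 (Cmul (be k) (h k)))))).
    - apply Csum_ext; intros. field; auto.
    - rewrite Csum_scal, Csum_sub, !Csum_scal. fold s1 s2. field; auto. }
  rewrite Hsum.
  replace (Csub (Csub (Cdiv (Cadd f0 s1) (Cadd g0 s2)) (Cdiv f0 g0)) (Cdiv (Csub (Cmul s1 g0) (Cmul f0 s2)) (Cmul g0 g0)))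
    with (Cmul (Cmul s2 (Csub (Cmul f0 s2) (Cmul g0 s1))) (Cinv (Cmul (Cadd g0 s2) (Cmul g0 g0))))
    by (field; auto).
  rewrite !Cabs_mul, Cabs_inv by (repeat apply Cmul_neq0; auto). rewrite !Cabs_mul. fold a0.
  assert (Hm : Cabs (Csub (Cmul f0 s2) (Cmul g0 s1)) <= K * v).
  { eapply Rle_trans; [apply Cabs_sub_triangle|]. rewrite !Cabs_mul. fold a0. unfold K.
    pose proof (Cabs_nonneg f0). pose proof (Cabs_nonneg s1). pose proof (Cabs_nonneg s2).
    assert (Cabs f0 * Cabs s2 <= Cabs f0 * (B * v)) by (apply Rmult_le_compat_l; auto).
    assert (a0 * Cabs s1 <= a0 * (A * v)) by (apply Rmult_le_compat_l; lra). nra. }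
  assert (Hinv : / (Cabs (Cadd g0 s2) * (a0 * a0)) <= 2 / (a0 * a0 * a0)).
  { apply Rle_trans with (/ (a0 / 2 * (a0 * a0))).
    - apply Rinv_le_contravar; [apply Rmult_lt_0_compat; nra|]. apply Rmult_le_compat_r; nra.
    - right; field; lra. }
  pose proof (Cabs_nonneg s2). pose proof (Cabs_nonneg (Csub (Cmul f0 s2) (Cmul g0 s1))).
  assert (0 <= / (Cabs (Cadd g0 s2) * (a0 * a0))) by (apply Rlt_le, Rinv_0_lt_compat; apply Rmult_lt_0_compat; nra).
  apply Rle_trans with (B * v * (K * v) * (2 / (a0 * a0 * a0))).
  { apply Rmult_le_compat; auto. apply Rmult_le_pos; auto. apply Rmult_le_compat; auto. }
  apply Rle_trans with (C * v * v). { right. unfold C. field. lra. }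
  assert (v <= eps / (C + 1)) by lra.
  assert (C * v <= eps).
  { apply Rle_trans with (C * (eps / (C + 1))); [apply Rmult_le_compat_l; auto|].
    apply Rle_trans with ((C + 1) * (eps / (C + 1))); [apply Rmult_le_compat_r; [apply Rlt_le, Rdiv_lt_0_compat|]; lra|].
    right; field; lra. }
  nra.
Qed.
Lemma lin_expand N (L : mat) i k w h :
  mulmv N L (chart_emb i (vadd w h)) k =
  Cadd (mulmv N L (chart_emb i w) k) (Csum N (fun l => Cmul (if Nat.eqb l i then C0 else L k l) (h l))).
Proof.
  unfold mulmv. rewrite <- Csum_add. apply Csum_ext. intros l Hl.
  unfold chart_emb, vadd. destruct (Nat.eqb l i); ring.
Qed.

Lemma Cadd_opp_l_aux a b : Cadd a b = C0 -> a = Copp b.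
Proof. intros E. replace a with (Csub (Cadd a b) b) by ring. rewrite E. ring. Qed.

Lemma lin_holo N L : holo_proj N (mulmv N L).
Proof.
  intros v0 i j Hi Hj Hvi HFj. cbv zeta.
  set (w0 := fun k => Cdiv (v0 k) (v0 i)).
  set (Lp := fun k l => if Nat.eqb l i then C0 else L k l).
  destruct (chart_proj N v0 i Hi Hvi) as [l0 [Hl0 E0]]. fold w0 in E0.
  assert (Hg0 : mulmv N L (chart_emb i w0) j <> C0).
  { rewrite (mulmv_ext N L _ (fun k => Cmul l0 (v0 k))) by auto. rewrite mulmv_scal. apply Cmul_neq0; auto. }
  set (g0 := mulmv N L (chart_emb i w0) j) in *.
  set (B := Rsumn N (fun l => Cabs (Lp j l))).
  assert (HB : 0 <= B) by (apply Rsumn_nonneg; intros; apply Cabs_nonneg).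
  pose proof (Cabs_pos _ Hg0).
  exists (Cabs g0 / (B + 1)). split; [apply Rdiv_lt_0_compat; lra|].
  intros w Hw.
  assert (Hwnz : mulmv N L (chart_emb i w) j <> C0).
  { replace w with (vadd w0 (vsub w w0)) by (extensionality k; unfold vadd, vsub; ring).
    rewrite lin_expand. fold g0. intro E.
    pose proof (Csum_lin_bound N (Lp j) (vsub w w0)) as HH. fold B in HH. unfold Lp in HH.
    assert (Eg : g0 = Copp (Csum N (fun l => Cmul (if Nat.eqb l i then C0 else L j l) (vsub w w0 l)))).
    { rewrite <- (Cadd_opp_l_aux g0 _ E). reflexivity. }
    cbv beta in HH. rewrite <- Cabs_opp, <- Eg in HH. clear Eg.
    pose proof (vnorm_nonneg N (vsub w w0)).
    assert (B * vnorm N (vsub w w0) < Cabs g0).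
    { apply Rle_lt_trans with (B * (Cabs g0 / (B + 1))); [apply Rmult_le_compat_l; lra|].
      apply Rlt_le_trans with ((B+1) * (Cabs g0 / (B + 1))); [apply Rmult_lt_compat_r; [apply Rdiv_lt_0_compat|]; lra| right; field; lra]. }
    lra. }
  split; auto.
  intros k Hk.
  exists (fun l => Cdiv (Csub (Cmul (Lp k l) (mulmv N L (chart_emb i w) j)) (Cmul (mulmv N L (chart_emb i w) k) (Lp j l)))
                  (Cmul (mulmv N L (chart_emb i w) j) (mulmv N L (chart_emb i w) j))).
  intros eps He.
  destruct (quot_affine N (mulmv N L (chart_emb i w) k) (mulmv N L (chart_emb i w) j) (Lp k) (Lp j) Hwnz eps He)
    as [d [Hd Hq]].
  exists d; split; auto. intros h Hh. cbv beta. rewrite !lin_expand. apply Hq; auto.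
Qed.

Lemma lin_proj_map N L L' : (forall v k, (k < N)%nat -> mulmv N L' (mulmv N L v) k = v k) ->
  proj_map N (mulmv N L).
Proof.
  intros Hinv. split.
  - intros v [k [Hk Hv]]. apply NNPP; intro Hz. apply Hv. rewrite <- (Hinv v k Hk).
    rewrite (mulmv_ext N L' _ (fun _ => C0)). { unfold mulmv; apply Csum_zero; intros; ring. }
    intros l Hl. apply NNPP; intro; apply Hz; exists l; auto.
  - intros v w Hv [l [Hl E]]. exists l; split; auto. intros k Hk.
    rewrite (mulmv_ext N L w (fun k => Cmul l (v k))) by auto. rewrite mulmv_scal. reflexivity.
Qed.
From Stdlib Require FinFun.

Lemma backward (n : nat) (I : Type) (Sm Sinv Tm Tinv : mat) (p q : I -> nat -> Cplx)
  (HS : mat_inverse (Datatypes.S n) Sm Sinv) (HT : mat_inverse (Datatypes.S n) Tm Tinv)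
  (Hp : forall r k, (k <= n)%nat -> p r k <> C0) (Hq : forall r k, (k <= n)%nat -> q r k <> C0) :
  (exists rho : nat -> nat, is_perm (Datatypes.S n) rho /\
     forall (r : I) (k : nat), (k < n)%nat ->
       Cdiv (q r (rho k)) (q r (rho n)) = Cdiv (p r k) (p r n)) ->
  (exists F G : vec -> vec,
     biholo_proj (Datatypes.S n) F G /\
     forall (r : I) (v : vec), nonzero_vec (Datatypes.S n) v ->
       proj_eq (Datatypes.S n)
         (F (mulmv (Datatypes.S n) (conj_diag (Datatypes.S n) Sm Sinv (p r)) v))
         (mulmv (Datatypes.S n) (conj_diag (Datatypes.S n) Tm Tinv (q r)) (F v))).
Proof.
  intros [rho [[Hr1 Hr2] Hrel]].
  set (N := Datatypes.S n) in *.
  assert (Hsurj : forall i, (i < N)%nat -> exists k, (k < N)%nat /\ rho k = i).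
  { intros i Hi. apply (proj1 (@FinFun.bInjective_bSurjective N rho Hr1) Hr2); auto. }
  set (M := fun i k => if Nat.eqb i (rho k) then C1 else C0).
  set (Mt := fun k i => if Nat.eqb i (rho k) then C1 else C0).
  assert (HM : forall u k, (k < N)%nat -> mulmv N M u (rho k) = u k).
  { intros u k Hk. unfold mulmv, M. rewrite (Csum_single N _ k Hk).
    - rewrite Nat.eqb_refl. ring.
    - intros l Hl Hlk. destruct (Nat.eqb_spec (rho k) (rho l)). { apply Hr2 in e; auto; lia. } ring. }
  assert (HMt : forall w k, (k < N)%nat -> mulmv N Mt w k = w (rho k)).
  { intros w k Hk. unfold mulmv, Mt. rewrite (Csum_single N _ (rho k) (Hr1 k Hk)).
    - rewrite Nat.eqb_refl. ring.
    - intros l Hl Hlk. destruct (Nat.eqb_spec l (rho k)); [lia|]. ring. }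
  set (LF := mulmm N (mulmm N Tm M) Sinv). set (LG := mulmm N (mulmm N Sm Mt) Tinv).
  assert (EF : forall v, mulmv N LF v = mulmv N Tm (mulmv N M (mulmv N Sinv v))) by (intros; unfold LF; rewrite !mulmv_mulmm; auto).
  assert (EG : forall v, mulmv N LG v = mulmv N Sm (mulmv N Mt (mulmv N Tinv v))) by (intros; unfold LG; rewrite !mulmv_mulmm; auto).
  assert (HGF : forall v k, (k < N)%nat -> mulmv N LG (mulmv N LF v) k = v k).
  { intros v k Hk. rewrite EG, EF. rewrite (mulmv_ext N Sm _ (mulmv N Sinv v)); [apply mulmv_inv_r; auto|].
    intros l Hl. rewrite HMt by auto. rewrite mulmv_inv_l by auto. apply HM; auto. }
  assert (HFG : forall w k, (k < N)%nat -> mulmv N LF (mulmv N LG w) k = w k).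
  { intros w k Hk. rewrite EG, EF. rewrite (mulmv_ext N Tm _ (mulmv N Tinv w)); [apply mulmv_inv_r; auto|].
    intros i Hi. destruct (Hsurj i Hi) as [k0 [Hk0 E]]. subst i.
    rewrite (mulmv_ext N M _ (mulmv N Mt (mulmv N Tinv w))) by (intros; apply mulmv_inv_l; auto).
    rewrite HM by auto. apply HMt; auto. }
  exists (mulmv N LF), (mulmv N LG). split.
  - split; [apply (lin_proj_map N LF LG); auto|].
    split; [apply (lin_proj_map N LG LF); auto|].
    split; [intros v _; apply (proj_eq_scal _ _ _ C1 C1_neq_C0); intros; rewrite HGF by auto; ring|].
    split; [intros v _; apply (proj_eq_scal _ _ _ C1 C1_neq_C0); intros; rewrite HFG by auto; ring|].
    split; apply lin_holo.
  - intros r v _.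
    assert (Hpn : p r n <> C0) by (apply Hp; lia).
    assert (Hqn : q r (rho n) <> C0) by (apply Hq; assert (rho n < N)%nat by (apply Hr1; unfold N; lia); unfold N in *; lia).
    set (lam := Cdiv (q r (rho n)) (p r n)).
    assert (Hlam : lam <> C0) by (apply Cdiv_neq0; auto).
    assert (Hqrel : forall k, (k < N)%nat -> q r (rho k) = Cmul lam (p r k)).
    { intros k Hk. unfold lam. destruct (Nat.eq_dec k n).
      - subst. field; auto.
      - pose proof (Hrel r k ltac:(unfold N in Hk; lia)) as E.
        replace (q r (rho k)) with (Cmul (Cdiv (q r (rho k)) (q r (rho n))) (q r (rho n))) by (field; auto).
        rewrite E. field; auto. }
    apply (proj_eq_scal _ _ _ lam Hlam). intros i Hi.
    set (u := mulmv N Sinv v).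
    rewrite conj_diag_apply by auto.
    rewrite (mulmv_ext N Tm _ (fun k => Cmul lam (mulmv N M (fun l => Cmul (p r l) (u l)) k))).
    + rewrite mulmv_scal. f_equal. rewrite EF. symmetry.
      rewrite (mulmv_ext N M _ (fun l => Cmul (p r l) (u l))); [reflexivity|]. intros l Hl.
      unfold u. apply Tinv_Q; auto.
    + intros k Hk. rewrite EF. rewrite mulmv_inv_l by auto.
      destruct (Hsurj k Hk) as [k0 [Hk0 E]]. subst k. rewrite !HM by auto. fold u.
      rewrite Hqrel by auto. ring.
Qed.

(* Indices 1..n+1 of the paper are 0..n here; the paper's index n+1 is n. *)
Theorem theorem6p8 (n : nat) (Hn : (1 < n)%nat) (I : Type)
  (S Sinv T Tinv : mat) (p q : I -> nat -> Cplx)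
  (HS : mat_inverse (Datatypes.S n) S Sinv)
  (HT : mat_inverse (Datatypes.S n) T Tinv)
  (Hp : forall r k, (k <= n)%nat -> p r k <> C0)
  (Hq : forall r k, (k <= n)%nat -> q r k <> C0)
  (Hsp : forall r, simple_set n (fun k => Cln (Cdiv (p r k) (p r n))))
  (Hsq : forall r, simple_set n (fun k => Cln (Cdiv (q r k) (q r n)))) :
  (exists F G : vec -> vec,
     biholo_proj (Datatypes.S n) F G /\
     forall (r : I) (v : vec), nonzero_vec (Datatypes.S n) v ->
       proj_eq (Datatypes.S n)
         (F (mulmv (Datatypes.S n) (conj_diag (Datatypes.S n) S Sinv (p r)) v))
         (mulmv (Datatypes.S n) (conj_diag (Datatypes.S n) T Tinv (q r)) (F v)))
  <->
  (exists rho : nat -> nat, is_perm (Datatypes.S n) rho /\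
     forall (r : I) (k : nat), (k < n)%nat ->
       Cdiv (q r (rho k)) (q r (rho n)) = Cdiv (p r k) (p r n)).
Proof.
  split.
  - apply (forward n Hn I S Sinv T Tinv p q HS HT Hp Hq Hsp).
  - apply (backward n I S Sinv T Tinv p q HS HT Hp Hq).
Qed.
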